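(* Let $K\ge1$ and let $w_1,w_2,\dots$ be vectors in the probability simplex $\mathcal P_K=\{w\in[0,1]^K:\sum_kw^k=1\}$, with the first $K$ of them satisfying $\sum_{s=1}^Kw_s^k=1$ for every $k\in[K]$ (the burn-in rounds, in which each arm is played exactly once, so $n_K^k=1$ for all $k$). For $t>K$, suppose the arm played at round $t$ is \[ k_t=\mathrm{argmin}_{k\in[K]}\frac{n_{t-1}^k}{\sum_{s=1}^tw_s^k}, \] where $n_t^k$ denotes the number of times arm $k$ has been played up to and including round $t$ (so $n_t^{k_t}=n_{t-1}^{k_t}+1$ and $n_t^k=n_{t-1}^k$ for $k\ne k_t$). Then for all $t\ge K$ and all $k\in[K]$, \[ \sum_{s=1}^tw_s^k-(K-1)\le n_t^k\le\sum_{s=1}^tw_s^k+1. \]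
   Context: This is the tracking rule used within each phase of an arm-sampling algorithm: at each round a sampling distribution $w_t$ over the $K$ arms is produced, and the played arm is chosen by the displayed argmin rule (ties broken arbitrarily). *)

(* Defs.v *)
(* Rounds are indexed 1,2,3,...; arms by 'I_K. *)
From mathcomp Require Import all_boot all_order all_algebra.
Set Implicit Arguments. Unset Strict Implicit. Unset Printing Implicit Defensive.
Import Order.TTheory GRing.Theory Num.Theory.
Local Open Scope ring_scope.

Definition npulls (K : nat) (play : nat -> 'I_K) (t : nat) (k : 'I_K) : nat :=
  (\sum_(1 <= s < t.+1) (play s == k))%N.

Definition cumw (R : realFieldType) (K : nat) (w : nat -> 'I_K -> R)
    (t : nat) (k : 'I_K) : R :=
  \sum_(1 <= s < t.+1) w s k.

Definition in_simplex (R : realFieldType) (K : nat) (v : 'I_K -> R) : Prop :=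
  (forall k, 0 <= v k <= 1) /\ \sum_(k < K) v k = 1.

(* Main.v *)
Require Import Defs.
From mathcomp Require Import all_boot all_order all_algebra.
From mathcomp Require Import lra.
Import Order.TTheory GRing.Theory Num.Theory.
Local Open Scope ring_scope.

Lemma npullsS K (play : nat -> 'I_K) t k :
  npulls play t.+1 k = (npulls play t k + (play t.+1 == k))%N.
Proof. by rewrite /npulls big_nat_recr. Qed.

Lemma cumwS (R : realFieldType) K (w : nat -> 'I_K -> R) t k :
  cumw w t.+1 k = cumw w t k + w t.+1 k.
Proof. by rewrite /cumw big_nat_recr. Qed.

Lemma ind_sum K (i : 'I_K) : (\sum_(k < K) (i == k) = 1)%N.
Proof.
rewrite (bigD1 i) //= eqxx big1 // => j /negbTE; by rewrite eq_sym => ->.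
Qed.

Lemma sum_npulls K (play : nat -> 'I_K) t :
  (\sum_(k < K) npulls play t k = t)%N.
Proof.
elim: t => [|t IH].
  by apply: big1 => k _; rewrite /npulls big_geq.
under eq_bigr do rewrite npullsS.
by rewrite big_split /= IH ind_sum addn1.
Qed.

Lemma sum_cumw (R : realFieldType) K (w : nat -> 'I_K -> R) t :
  (forall s, (1 <= s)%N -> in_simplex (w s)) ->
  \sum_(k < K) cumw w t k = t%:R.
Proof.
move=> hs; elim: t => [|t IH].
  by apply: big1 => k _; rewrite /cumw big_geq.
under eq_bigr do rewrite cumwS.
by rewrite big_split /= IH (proj2 (hs t.+1 isT)) -natr1.
Qed.

Theorem lemma3 (R : realFieldType) (K : nat) (w : nat -> 'I_K -> R)
    (play : nat -> 'I_K) :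
  (0 < K)%N ->
  (forall s, (1 <= s)%N -> in_simplex (w s)) ->
  (forall k, cumw w K k = 1) ->
  (forall k, npulls play K k = 1%N) ->
  (forall t, (K < t)%N -> forall j : 'I_K,
      (npulls play t.-1 (play t))%:R / cumw w t (play t)
        <= (npulls play t.-1 j)%:R / cumw w t j) ->
  forall t, (K <= t)%N -> forall k : 'I_K,
    cumw w t k - (K - 1)%:R <= (npulls play t k)%:R /\
    (npulls play t k)%:R <= cumw w t k + 1.
Proof.
move=> K0 hs hW hN hmin.
have wge0 : forall s k, (1 <= s)%N -> 0 <= w s k.
  move=> s k /hs [h _]; by case/andP: (h k).

have Wpos : forall m k, 1 <= cumw w (K + m) k.
  move=> m k; elim: m => [|m IH]; first by rewrite addn0 hW.
  rewrite addnS cumwS; apply: le_trans IH _; rewrite lerDl; exact: wge0.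
have up : forall m k, (npulls play (K + m) k)%:R <= cumw w (K + m) k + 1.
  move=> m; elim: m => [|m IH] k; first by rewrite addn0 hN hW; lra.
  rewrite addnS npullsS cumwS natrD.
  have [<-|ne] := eqVneq (play (K + m).+1) k; last first.
    rewrite addr0; apply: le_trans (IH k) _.
    rewrite lerD2r lerDl; exact: wge0.
  rewrite lerD2r -cumwS.
  set W := cumw w (K + m).+1.
  set N := fun j => (npulls play (K + m) j)%:R : R.
  set i := play (K + m).+1.
  have hW1 : forall j, 0 < W j by move=> j; rewrite /W -addnS; apply: lt_le_trans (Wpos _ j).
  set c := N i / W i.
  have hc : forall j, c * W j <= N j.
    move=> j; have := hmin (K + m).+1 (leq_addr m K) j.
    rewrite -/i /= -/W -/(N i) -/(N j) -/c => h.
    by rewrite -ler_pdivlMr.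
  have sumW : \sum_j W j = (K + m).+1%:R by rewrite /W sum_cumw.
  have sumN : \sum_j N j = (K + m)%:R by rewrite /N -natr_sum sum_npulls.
  have hs1 : c * (K + m).+1%:R <= (K + m)%:R.
    rewrite -sumW -sumN mulr_sumr; apply: ler_sum => j _; exact: hc.
  have x0 : 0 <= (K + m)%:R :> R by [].
  rewrite -natr1 in hs1.
  have c1 : c <= 1 by nra.
  have hNi : N i = c * W i by rewrite /c divfK // gt_eqF.
  have := hW1 i; rewrite -/(N i) hNi; nra.
move=> t Kt k.
have [m ->] : exists m, t = (K + m)%N by exists (t - K)%N; rewrite subnKC.
split; last exact: up.
set W := cumw w (K + m).
set N := fun j => (npulls play (K + m) j)%:R : R.
have sumW : \sum_j W j = (K + m)%:R by rewrite /W sum_cumw.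
have sumN : \sum_j N j = (K + m)%:R by rewrite /N -natr_sum sum_npulls.
rewrite (bigD1 k) //= in sumW; rewrite (bigD1 k) //= in sumN.
have hle : \sum_(j | j != k) N j <= \sum_(j | j != k) (W j + 1).
  by apply: ler_sum => j _; exact: up.
rewrite big_split /= sumr_const cardC1 card_ord in hle.
rewrite -/(N k) -/(W k).
have e : (K.-1)%:R = (K - 1)%:R :> R by rewrite subn1.
rewrite -e.
move: hle; rewrite -[1 *+ _]/(_%:R).
lra.
Qed.
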